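(* There is an absolute constant $c>0$ such that for all integers $n,n_1,n_2,n_3$ with $n=n_1+n_2+n_3$ and $\tilde m_1(n,n_1,n_2,n_3)\neq0$ one has $$|\Phi|\ge \begin{cases} c\,|n_1+n_2|\,|n_2+n_3| & \text{if } |n_2|\ge |n_3|,\\ c\,|n_1+n_3|\,|n_2+n_3| &\text{if } |n_2|<|n_3|,\end{cases}$$ where $\Phi=n|n|-n_1|n_1|-n_2|n_2|-n_3|n_3|$. In particular $\Phi\ne0$ whenever $\tilde m_1\neq 0$.
   Context: Write $n_{ij\ldots}=n_i+n_j+\cdots$ and $\hat n:=n-i\mathbf 1_{\{n=0\}}$. For integers with $n=n_{123}$, $m_1(n,n_1,n_2,n_3):=2i\frac{n\,n_{23}}{\hat n_1\hat n_2}\mathbf 1_{\{n>0\}}\mathbf 1_{\{n_{23}<0\}}\mathbf 1_{\{n_3\neq0\}}$ and $\tilde m_1:=m_1\mathbf 1_{\{n_{12}n_{13}\neq0\}}$. *)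

(* Defs.v *)
(* m_1 is complex-valued; we use algC (algebraic complex numbers),
   which contains every value m_1 can take (rational multiples of i / Gaussian rationals). *)
From HB Require Import structures.
From mathcomp Require Import all_boot all_order all_algebra all_field.
Set Implicit Arguments. Unset Strict Implicit. Unset Printing Implicit Defensive.
Import Order.TTheory GRing.Theory Num.Theory.
Local Open Scope ring_scope.

Definition ind (b : bool) : algC := if b then 1 else 0.

Definition nhat (n : int) : algC := n%:~R - 'i * ind (n == 0).

Definition m1 (n n1 n2 n3 : int) : algC :=
  2 * 'i * (((n * (n2 + n3))%R : int)%:~R / (nhat n1 * nhat n2))
  * ind (0 < n) * ind (n2 + n3 < 0) * ind (n3 != 0).

Definition m1t (n n1 n2 n3 : int) : algC :=
  m1 n n1 n2 n3 * ind ((n1 + n2) * (n1 + n3) != 0).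

Definition Phi (n n1 n2 n3 : int) : int :=
  n * `|n| - n1 * `|n1| - n2 * `|n2| - n3 * `|n3|.

(* Main.v *)
Require Import Defs.
From HB Require Import structures.
From mathcomp Require Import all_boot all_order all_algebra all_field.
Import Order.TTheory GRing.Theory Num.Theory.
Local Open Scope ring_scope.
Set Warnings "-notation-overridden,-ambiguous-paths".
From mathcomp Require Import zify ring.
Lemma ext n n1 n2 n3 : m1t n n1 n2 n3 != 0 ->
  [/\ 0 < n, n2 + n3 < 0, n3 != 0 & (n1 + n2) * (n1 + n3) != 0].
Proof.
rewrite /m1t /m1 /ind.
case: (0 < n); last by rewrite !(mulr0, mul0r) eqxx.
case: (n2 + n3 < 0); last by rewrite !(mulr0, mul0r) eqxx.
case: (n3 != 0); last by rewrite !(mulr0, mul0r) eqxx.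
case: ((n1 + n2) * (n1 + n3) != 0); last by rewrite !(mulr0, mul0r) eqxx.
by [].
Qed.

Lemma key n1 n2 n3 : 0 < n1 + n2 + n3 -> n2 + n3 < 0 -> n3 != 0 ->
  (n1 + n2) * (n1 + n3) != 0 ->
  if `|n3| <= `|n2|
  then `|(n1 + n2) * (n2 + n3)| <= `|Phi (n1 + n2 + n3) n1 n2 n3|
  else `|(n1 + n3) * (n2 + n3)| <= `|Phi (n1 + n2 + n3) n1 n2 n3|.
Proof.
rewrite /Phi => H1 H2 H3 H4.
have [h2|h2] := lerP 0 n2; have [h3|h3] := lerP 0 n3.
- lia.
- rewrite (ger0_norm h2) (ltr0_norm h3) (ger0_norm (ltW H1)).
  have -> : `|n1| = n1 by apply: ger0_norm; lia.
  have -> : (n1 + n2 + n3) * (n1 + n2 + n3) - n1 * n1 - n2 * n2 - n3 * - n3 = 2 * ((n2 + n3) * (n1 + n3)) by ring.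
  rewrite ifF; last by lia.
  rewrite !normrM (_ : `|2| = 2 :> int) //.
  have := normr_ge0 (n1 + n3); have := normr_ge0 (n2 + n3); nia.
- rewrite (ltr0_norm h2) (ger0_norm h3) (ger0_norm (ltW H1)).
  have -> : `|n1| = n1 by apply: ger0_norm; lia.
  have -> : (n1 + n2 + n3) * (n1 + n2 + n3) - n1 * n1 - n2 * - n2 - n3 * n3 = 2 * ((n1 + n2) * (n2 + n3)) by ring.
  rewrite ifT; last by lia.
  rewrite !normrM (_ : `|2| = 2 :> int) //.
  have := normr_ge0 (n1 + n2); have := normr_ge0 (n2 + n3); nia.
- rewrite (ltr0_norm h2) (ltr0_norm h3) (ger0_norm (ltW H1)).
  have -> : `|n1| = n1 by apply: ger0_norm; lia.
  have -> : (n1 + n2 + n3) * (n1 + n2 + n3) - n1 * n1 - n2 * - n2 - n3 * - n3 = 2 * ((n2 + n3) * (n1 + n2 + n3)) - 2 * (n2 * n3) by ring.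
  have P : 0 < n2 * n3 by nia.
  have Q : (n2 + n3) * (n1 + n2 + n3) < 0 by nia.
  rewrite (@ler0_norm _ (2 * ((n2 + n3) * (n1 + n2 + n3)) - 2 * (n2 * n3))); last by lia.
  rewrite !normrM (ler0_norm (ltW H2)).
  case: ifP => C; rewrite ?(ltr0_norm h2) ?(ltr0_norm h3) in C.
  + rewrite ger0_norm; last by lia.
    have : 0 <= (- n3) * (n3 - n2) by apply: mulr_ge0; lia.
    nia.
  + rewrite ger0_norm; last by lia.
    have : 0 <= (- n2) * (n2 - n3) by apply: mulr_ge0; lia.
    nia.
Qed.

Theorem mainTheorem4 :
  (exists c : rat, 0 < c /\
    forall n n1 n2 n3 : int, n = n1 + n2 + n3 -> m1t n n1 n2 n3 != 0 ->
      if `|n3| <= `|n2|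
      then c * `|(n1 + n2) * (n2 + n3)|%:~R <= `|Phi n n1 n2 n3|%:~R
      else c * `|(n1 + n3) * (n2 + n3)|%:~R <= `|Phi n n1 n2 n3|%:~R)
  /\ (forall n n1 n2 n3 : int, n = n1 + n2 + n3 -> m1t n n1 n2 n3 != 0 ->
        Phi n n1 n2 n3 != 0).
Proof.
split.
  exists 1; split; first by [].
  move=> n n1 n2 n3 -> /ext [h1 h2 h3 h4].
  have := @key n1 n2 n3 h1 h2 h3 h4.
  case: ifP => _; rewrite mul1r ler_int; exact.
move=> n n1 n2 n3 -> /ext [h1 h2 h3 h4].
have := @key n1 n2 n3 h1 h2 h3 h4.
have s0 : n2 + n3 != 0 by rewrite lt_eqF.
have a0 : n1 + n2 != 0 by apply/negP => /eqP E; move: h4; rewrite E mul0r eqxx.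
have b0 : n1 + n3 != 0 by apply/negP => /eqP E; move: h4; rewrite E mulr0 eqxx.
move=> K; rewrite -normr_gt0; case: ifP K => C K; apply: lt_le_trans K;
  by rewrite normr_gt0 mulf_neq0.
Qed.
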